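(* Let $\frac12<\beta<\frac54$ and $\alpha+\beta=\frac54$, and let $r>\max(2\beta,\beta+1)$. Then there exists a constant $C>0$ such that for all $v\in V^{r-1}$, $\theta\in H^{r-\beta}$, $\phi\in H^{r-\beta-1}$, \[ |\langle\Lambda^{-2\alpha}v\cdot\nabla\theta,\Lambda^{2r-2\beta-2}\phi\rangle|\le C\|v\|_{V^{r-1}}\|\theta\|_{H^{r-\beta}}\|\phi\|_{H^{r-\beta-1}}. \]
   Context: On the torus $\mathbb T=[0,2\pi]^3$, for $s\in\mathbb R$, $H^s$ is the space of real periodic functions/distributions $f=\sum_{k\in\mathbb Z^3\setminus\{0\}}f_ke^{ik\cdot x}$ (zero mean) with $f_{-k}=\overline{f_k}$ and $\|f\|_{H^s}^2=\sum_k|f_k|^2|k|^{2s}<\infty$; $V^s$ is the analogous space of vector fields $w=\sum_{k\neq0}w_ke^{ik\cdot x}$, $w_k\in\mathbb C^3$, $w_{-k}=\overline{w_k}$, $w_k\cdot k=0$ (divergence free, zero mean), with $\|w\|_{V^s}^2=\sum_k|w_k|^2|k|^{2s}$. $\Lambda^s$ is the Fourier multiplier by $|k|^s$. $\langle\cdot,\cdot\rangle$ is the $L^2(\mathbb T)$ scalar product (duality pairing). *)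

(* Defs.v *)
From Stdlib Require Import Reals ZArith List.
From Coquelicot Require Export Coquelicot.
Export ListNotations.
Open Scope R_scope.

Definition Z3 := (Z * Z * Z)%type.
Definition z3zero : Z3 := (0%Z, 0%Z, 0%Z).
Definition zopp (k : Z3) : Z3 := let '(a, b, c) := k in ((-a)%Z, (-b)%Z, (-c)%Z).
Definition zsub (k j : Z3) : Z3 :=
  let '(a, b, c) := k in let '(a', b', c') := j in ((a - a')%Z, (b - b')%Z, (c - c')%Z).

Definition znorm (k : Z3) : R :=
  let '(a, b, c) := k in sqrt (IZR a ^ 2 + IZR b ^ 2 + IZR c ^ 2).

(** Symbol of Lambda^s: |k|^s for k <> 0 (value at k = 0 irrelevant: zero mean). *)
Definition Lam (s : R) (k : Z3) : R :=
  if Z.eqb (let '(a, b, c) := k in Z.abs a + Z.abs b + Z.abs c)%Z 0%Z then 0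
  else Rpower (znorm k) s.

Definition zrange (N : nat) : list Z :=
  map (fun n => (Z.of_nat n - Z.of_nat N)%Z) (seq 0 (2 * N + 1)).
Definition cube (N : nat) : list Z3 :=
  flat_map (fun a => flat_map (fun b => map (fun c => (a, b, c)) (zrange N))
                              (zrange N)) (zrange N).
Definition rsum_cube (a : Z3 -> R) (N : nat) : R :=
  fold_right (fun k acc => a k + acc) 0 (cube N).
Definition csum_cube (a : Z3 -> C) (N : nat) : C :=
  fold_right (fun k acc => Cplus (a k) acc) (RtoC 0) (cube N).

(** Absolute summability over Z^3 and the value of a sum over Z^3
    (limit of the cube partial sums; for absolutely summable families this is
    the unconditional sum). *)
Definition abs_summable (a : Z3 -> C) : Prop :=
  exists M : R, forall N, rsum_cube (fun k => Cmod (a k)) N <= M.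
Definition zsumR (a : Z3 -> R) : R := real (Lim_seq (rsum_cube a)).
Definition zsumC (a : Z3 -> C) : C :=
  (real (Lim_seq (fun N => fst (csum_cube a N))),
   real (Lim_seq (fun N => snd (csum_cube a N)))).

(** Scalar H^s: zero mean, real (f_{-k} = conj f_k), sum |f_k|^2 |k|^{2s} < oo. *)
Definition in_H (s : R) (f : Z3 -> C) : Prop :=
  f z3zero = RtoC 0 /\ (forall k, f (zopp k) = Cconj (f k)) /\
  exists M : R, forall N, rsum_cube (fun k => Cmod (f k) ^ 2 * Lam s k ^ 2) N <= M.
Definition Hnorm (s : R) (f : Z3 -> C) : R :=
  sqrt (zsumR (fun k => Cmod (f k) ^ 2 * Lam s k ^ 2)).

Definition vec3 := (C * C * C)%type.
Definition vzero : vec3 := (RtoC 0, RtoC 0, RtoC 0).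
Definition vconj (w : vec3) : vec3 :=
  let '(a, b, c) := w in (Cconj a, Cconj b, Cconj c).
Definition vmod2 (w : vec3) : R :=
  let '(a, b, c) := w in Cmod a ^ 2 + Cmod b ^ 2 + Cmod c ^ 2.
(** bilinear (unconjugated) dot product w . k *)
Definition vdot (w : vec3) (k : Z3) : C :=
  let '(a, b, c) := w in let '(x, y, z) := k in
  Cplus (Cplus (Cmult a (RtoC (IZR x))) (Cmult b (RtoC (IZR y))))
        (Cmult c (RtoC (IZR z))).

(** V^s: zero mean, real, divergence free (w_k . k = 0), finite norm. *)
Definition in_V (s : R) (w : Z3 -> vec3) : Prop :=
  w z3zero = vzero /\ (forall k, w (zopp k) = vconj (w k)) /\
  (forall k, vdot (w k) k = RtoC 0) /\
  exists M : R, forall N, rsum_cube (fun k => vmod2 (w k) * Lam s k ^ 2) N <= M.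
Definition Vnorm (s : R) (w : Z3 -> vec3) : R :=
  sqrt (zsumR (fun k => vmod2 (w k) * Lam s k ^ 2)).

(** Fourier coefficients of (Lambda^{-2 alpha} v) . grad theta :
    at frequency k, the sum over j of |j|^{-2alpha} (v_j . i(k-j)) theta_{k-j}. *)
Definition conv_term (alpha : R) (v : Z3 -> vec3) (theta : Z3 -> C) (k j : Z3) : C :=
  Cmult (RtoC (Lam (-2 * alpha) j))
        (Cmult (Cmult Ci (vdot (v j) (zsub k j))) (theta (zsub k j))).
Definition transport_coef (alpha : R) (v : Z3 -> vec3) (theta : Z3 -> C) (k : Z3) : C :=
  zsumC (conv_term alpha v theta k).

Definition Lam_apply (s : R) (f : Z3 -> C) (k : Z3) : C := Cmult (RtoC (Lam s k)) (f k).

(** L^2(T) pairing on [0,2pi]^3 in Fourier variables: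
    <F, G> = (2 pi)^3 sum_k F_k conj(G_k). *)
Definition l2_integrand (F G : Z3 -> C) (k : Z3) : C := Cmult (F k) (Cconj (G k)).
Definition l2_pair (F G : Z3 -> C) : C :=
  Cmult (RtoC ((2 * PI) ^ 3)) (zsumC (l2_integrand F G)).

(* Main.v *)
Require Import Defs.
From Stdlib Require Import Reals ZArith List Lia Lra Psatz Permutation.
From Coquelicot Require Import Coquelicot.
Open Scope R_scope.

Definition lsum {A} (f : A -> R) (L : list A) : R :=
  fold_right (fun k acc => f k + acc) 0 L.

Lemma rsum_lsum f N : rsum_cube f N = lsum f (cube N).
Proof. reflexivity. Qed.

Lemma lsum_app {A} (f : A -> R) L M : lsum f (L ++ M) = lsum f L + lsum f M.
Proof. induction L; simpl; [ring| rewrite IHL; ring]. Qed.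

Lemma lsum_perm {A} (f : A -> R) L M : Permutation L M -> lsum f L = lsum f M.
Proof. induction 1; simpl; try lra. Qed.

Lemma lsum_le {A} (f g : A -> R) L : (forall x, In x L -> f x <= g x) -> lsum f L <= lsum g L.
Proof. induction L; simpl; intros H; [lra|].
  assert (f a <= g a) by auto. assert (lsum f L <= lsum g L) by auto. lra. Qed.

Lemma lsum_ext {A} (f g : A -> R) L : (forall x, In x L -> f x = g x) -> lsum f L = lsum g L.
Proof. induction L; simpl; intros H; [lra|].
  rewrite H by auto. rewrite IHL by auto. reflexivity. Qed.

Lemma lsum_nonneg {A} (f : A -> R) L : (forall x, In x L -> 0 <= f x) -> 0 <= lsum f L.
Proof. induction L; simpl; intros H; [lra|].
  assert (0 <= f a) by auto. assert (0 <= lsum f L) by auto. lra. Qed.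

Lemma lsum_scal {A} (f : A -> R) c L : lsum (fun x => c * f x) L = c * lsum f L.
Proof. induction L; simpl; [ring| rewrite IHL; ring]. Qed.

Lemma lsum_plus {A} (f g : A -> R) L : lsum (fun x => f x + g x) L = lsum f L + lsum g L.
Proof. induction L; simpl; [ring| rewrite IHL; ring]. Qed.

Lemma lsum_map {A B} (f : B -> R) (h : A -> B) L : lsum f (map h L) = lsum (fun x => f (h x)) L.
Proof. induction L; simpl; [ring| rewrite IHL; ring]. Qed.

Lemma lsum_flat_map {A B} (f : B -> R) (h : A -> list B) L :
  lsum f (flat_map h L) = lsum (fun x => lsum f (h x)) L.
Proof. induction L; simpl; [ring| rewrite lsum_app, IHL; ring]. Qed.

Lemma lsum_swap {A B} (F : A -> B -> R) L1 L2 :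
  lsum (fun x => lsum (F x) L2) L1 = lsum (fun y => lsum (fun x => F x y) L1) L2.
Proof. induction L1; simpl.
  - induction L2; simpl; [ring| rewrite <- IHL2; ring].
  - rewrite IHL1, <- lsum_plus. reflexivity. Qed.

Lemma lsum_abs {A} (f : A -> R) L : Rabs (lsum f L) <= lsum (fun x => Rabs (f x)) L.
Proof. induction L; simpl. rewrite Rabs_R0; lra.
  eapply Rle_trans; [apply Rabs_triang|]. lra. Qed.

Lemma lsum_incl {A} (f : A -> R) L M : NoDup L -> incl L M -> (forall x, 0 <= f x) ->
  lsum f L <= lsum f M.
Proof.
  intros HN; revert M; induction HN as [|x L HnL HN IH]; intros M Hi Hf.
  - simpl; apply lsum_nonneg; auto.
  - assert (Hx : In x M) by (apply Hi; left; auto).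
    destruct (in_split _ _ Hx) as (M1 & M2 & ->).
    rewrite <- (lsum_perm f _ _ (Permutation_middle M1 M2 x)). simpl.
    assert (lsum f L <= lsum f (M1 ++ M2)); [|lra].
    apply IH; auto. intros y Hy. assert (Hy' : In y (M1 ++ x :: M2)) by (apply Hi; right; auto).
    apply in_app_iff in Hy'. apply in_app_iff. destruct Hy' as [H|[H|H]]; auto.
    subst; contradiction.
Qed.

Lemma lsum_elem {A} (f : A -> R) L x : In x L -> (forall y, 0 <= f y) -> f x <= lsum f L.
Proof. intros Hx Hf. replace (f x) with (lsum f [x]) by (simpl; ring).
  apply lsum_incl; auto. apply NoDup_cons; [intros []|apply NoDup_nil]. intros y [<-|[]]; auto. Qed.

Lemma lsum_elem_in {A} (f : A -> R) L x : In x L -> (forall y, In y L -> 0 <= f y) -> f x <= lsum f L.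
Proof. induction L; simpl; [intros []|]; intros [->|H] Hf.
  - assert (0 <= lsum f L) by (apply lsum_nonneg; auto). lra.
  - assert (0 <= f a) by auto. assert (f x <= lsum f L) by auto. lra. Qed.

Lemma lsum_CS {A} (f g : A -> R) L : (forall x, 0 <= f x) -> (forall x, 0 <= g x) ->
  lsum (fun x => f x * g x) L <= sqrt (lsum (fun x => f x ^ 2) L) * sqrt (lsum (fun x => g x ^ 2) L).
Proof.
  intros Hf Hg.
  set (SA := lsum (fun x => f x ^ 2) L). set (SB := lsum (fun x => g x ^ 2) L).
  assert (HA : 0 <= SA) by (apply lsum_nonneg; intros; apply pow2_ge_0).
  assert (HB : 0 <= SB) by (apply lsum_nonneg; intros; apply pow2_ge_0).
  destruct (Req_dec (sqrt SA) 0) as [Ha|Ha].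
  { apply sqrt_eq_0 in Ha; auto. rewrite Ha, sqrt_0, Rmult_0_l.
    replace 0 with (lsum (fun _ : A => 0) L) by (clear; induction L; simpl; lra).
    apply lsum_le. intros x Hx.
    assert (f x ^ 2 <= SA) by (apply lsum_elem_in with (f := fun x => f x ^ 2); auto; intros; apply pow2_ge_0).
    assert (f x = 0) by nra. rewrite H0; lra. }
  destruct (Req_dec (sqrt SB) 0) as [Hb|Hb].
  { apply sqrt_eq_0 in Hb; auto. rewrite Hb, sqrt_0, Rmult_0_r.
    replace 0 with (lsum (fun _ : A => 0) L) by (clear; induction L; simpl; lra).
    apply lsum_le. intros x Hx.
    assert (g x ^ 2 <= SB) by (apply lsum_elem_in with (f := fun x => g x ^ 2); auto; intros; apply pow2_ge_0).
    assert (g x = 0) by nra. rewrite H0; lra. }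
  set (a := sqrt SA) in *. set (b := sqrt SB) in *.
  assert (ha : 0 < a) by (destruct (sqrt_pos SA) as [h|h]; [exact h| exfalso; apply Ha; unfold a; lra]).
  assert (hb : 0 < b) by (destruct (sqrt_pos SB) as [h|h]; [exact h| exfalso; apply Hb; unfold b; lra]).
  assert (ea : a * a = SA) by (apply sqrt_sqrt; auto).
  assert (eb : b * b = SB) by (apply sqrt_sqrt; auto).
  assert (H : lsum (fun x => f x * g x) L * (2 * a * b) <= b * b * SA + a * a * SB).
  { unfold SA, SB. rewrite Rmult_comm.
    rewrite <- (lsum_scal _ (b*b)), <- (lsum_scal _ (a*a)), <- (lsum_scal _ (2*a*b)), <- lsum_plus.
    apply lsum_le. intros x _. pose proof (Hf x). pose proof (Hg x).
    assert (0 <= (b * f x - a * g x)^2) by apply pow2_ge_0. nra. }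
  rewrite ea, eb in H. apply Rmult_le_reg_r with (2 * a * b). nra. nra.
Qed.

Lemma In_zrange z N : In z (zrange N) <-> (- Z.of_nat N <= z <= Z.of_nat N)%Z.
Proof. unfold zrange. rewrite in_map_iff. split.
  - intros (n & <- & Hn). apply in_seq in Hn. lia.
  - intros H. exists (Z.to_nat (z + Z.of_nat N)). split; [lia|]. apply in_seq. lia. Qed.

Lemma In_cube a b c N : In (a, b, c) (cube N) <->
  (- Z.of_nat N <= a <= Z.of_nat N)%Z /\ (- Z.of_nat N <= b <= Z.of_nat N)%Z /\
  (- Z.of_nat N <= c <= Z.of_nat N)%Z.
Proof. unfold cube. rewrite in_flat_map. split.
  - intros (a' & Ha & H). rewrite in_flat_map in H. destruct H as (b' & Hb & H).
    rewrite in_map_iff in H. destruct H as (c' & E & Hc). inversion E; subst.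
    rewrite !In_zrange in *. tauto.
  - intros (Ha & Hb & Hc). exists a. split; [apply In_zrange; auto|].
    rewrite in_flat_map. exists b. split; [apply In_zrange; auto|].
    rewrite in_map_iff. exists c. split; [auto|apply In_zrange; auto]. Qed.

Lemma NoDup_zrange N : NoDup (zrange N).
Proof. unfold zrange. apply FinFun.Injective_map_NoDup; [|apply seq_NoDup].
  intros x y H. lia. Qed.

Lemma NoDup_flat_map_tag {A B} (f : A -> list B) l :
  NoDup l -> (forall x, NoDup (f x)) -> (forall x y z, In z (f x) -> In z (f y) -> x = y) ->
  NoDup (flat_map f l).
Proof. induction 1 as [|x l Hx Hl IH]; intros Hf Ht; simpl; [constructor|].
  apply NoDup_app; auto. intros z Hz Hz'. apply in_flat_map in Hz'.
  destruct Hz' as (y & Hy & Hz'). assert (x = y) by (eapply Ht; eauto). subst; contradiction. Qed.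

Lemma NoDup_cube N : NoDup (cube N).
Proof. unfold cube. apply NoDup_flat_map_tag; [apply NoDup_zrange| |].
  - intros a. apply NoDup_flat_map_tag; [apply NoDup_zrange| |].
    + intros b. apply FinFun.Injective_map_NoDup; [|apply NoDup_zrange].
      intros x y H; inversion H; auto.
    + intros x y z Hx Hy. apply in_map_iff in Hx, Hy.
      destruct Hx as (c & <- & _). destruct Hy as (c' & E & _). inversion E; auto.
  - intros x y z Hx Hy. apply in_flat_map in Hx, Hy.
    destruct Hx as (b & _ & Hx). destruct Hy as (b' & _ & Hy).
    apply in_map_iff in Hx, Hy.
    destruct Hx as (c & <- & _). destruct Hy as (c' & E & _). inversion E; auto. Qed.

Lemma cube_mono N M : (N <= M)%nat -> incl (cube N) (cube M).
Proof. intros H [[a b] c] Hk. apply In_cube in Hk. apply In_cube. lia. Qed.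

Lemma list_in_cube (L : list Z3) : exists N, incl L (cube N).
Proof. induction L as [|[[a b] c] L [N HN]].
  - exists 0%nat. intros x [].
  - exists (Nat.max N (Z.to_nat (Z.abs a + Z.abs b + Z.abs c))).
    intros x [<-|Hx].
    + apply In_cube. lia.
    + eapply cube_mono; [|apply HN; auto]. lia. Qed.

Lemma zsub_inj k : FinFun.Injective (zsub k).
Proof. intros [[a b] c] [[a' b'] c'] H. destruct k as [[x y] z]. simpl in H.
  inversion H. f_equal; [f_equal|]; lia. Qed.

Lemma zsub_inj2 j : FinFun.Injective (fun k => zsub k j).
Proof. intros [[a b] c] [[a' b'] c'] H. destruct j as [[x y] z]. simpl in H.
  inversion H. f_equal; [f_equal|]; lia. Qed.

Lemma zrange_S N : zrange (S N) = ((- Z.of_nat (S N))%Z :: zrange N) ++ [Z.of_nat (S N)].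
Proof.  unfold zrange.
  replace (2 * S N + 1)%nat with (S (S (2 * N + 1))) by lia.
  rewrite seq_S. cbn [seq]. rewrite <- seq_shift. rewrite map_app, <- app_comm_cons, map_cons, map_map.
  rewrite <- !app_comm_cons. apply f_equal2; [lia|]. apply f_equal2.
  - apply map_ext; intros; lia.
  - cbn [map]. f_equal. lia.
Qed.

Definition bnd (f : Z3 -> R) := (forall x, 0 <= f x) /\ exists B, forall N, rsum_cube f N <= B.

Lemma rsum_mono f N M : (forall x, 0 <= f x) -> (N <= M)%nat -> rsum_cube f N <= rsum_cube f M.
Proof. intros Hf H. rewrite !rsum_lsum. apply lsum_incl; auto. apply NoDup_cube. apply cube_mono; auto. Qed.

Lemma zlim f : bnd f -> is_lim_seq (rsum_cube f) (zsumR f).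
Proof. intros [Hf [B HB]]. unfold zsumR.
  assert (ex_finite_lim_seq (rsum_cube f)).
  { apply ex_finite_lim_seq_incr with B; auto. intros n; apply rsum_mono; auto. }
  destruct H as [l Hl]. rewrite (is_lim_seq_unique _ _ Hl). simpl. exact Hl. Qed.

Lemma zsum_upper f B : bnd f -> (forall N, rsum_cube f N <= B) -> zsumR f <= B.
Proof. intros Hb H. pose proof (is_lim_seq_le _ _ _ _ H (zlim f Hb) (is_lim_seq_const B)). exact H0. Qed.

Lemma zsum_list f L : bnd f -> NoDup L -> lsum f L <= zsumR f.
Proof. intros Hb HL. destruct (list_in_cube L) as [N HN].
  assert (Rbar_le (lsum f L) (zsumR f)); [|exact H].
  apply is_lim_seq_le_loc with (fun _ => lsum f L) (rsum_cube f).
  - exists N. intros n Hn. eapply Rle_trans; [apply lsum_incl; eauto; apply Hb|].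
    rewrite <- rsum_lsum. apply rsum_mono; auto. apply Hb.
  - apply is_lim_seq_const.
  - apply zlim; auto. Qed.

Lemma zsum_nonneg f : bnd f -> 0 <= zsumR f.
Proof. intros Hb. replace 0 with (lsum f []) by reflexivity. apply zsum_list; auto. constructor. Qed.

Lemma lsum_zlim {A} (g : A -> Z3 -> R) L : (forall k, bnd (g k)) ->
  is_lim_seq (fun N => lsum (fun k => rsum_cube (g k) N) L) (lsum (fun k => zsumR (g k)) L).
Proof. intros Hb. induction L; simpl.
  - apply is_lim_seq_const.
  - apply is_lim_seq_plus'; auto. apply zlim; auto. Qed.

Lemma lsum_zsum_le {A} (g : A -> Z3 -> R) L B : (forall k, bnd (g k)) ->
  (forall N, lsum (fun k => rsum_cube (g k) N) L <= B) -> lsum (fun k => zsumR (g k)) L <= B.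
Proof. intros Hb H.
  pose proof (is_lim_seq_le _ _ _ _ H (lsum_zlim g L Hb) (is_lim_seq_const B)). exact H0. Qed.

Lemma csum_fst (g : Z3 -> C) L :
  fst (fold_right (fun k acc => Cplus (g k) acc) (RtoC 0) L) = lsum (fun k => fst (g k)) L.
Proof. induction L; simpl; auto. rewrite IHL. reflexivity. Qed.

Lemma csum_snd (g : Z3 -> C) L :
  snd (fold_right (fun k acc => Cplus (g k) acc) (RtoC 0) L) = lsum (fun k => snd (g k)) L.
Proof. induction L; simpl; auto. rewrite IHL. reflexivity. Qed.

Lemma real_lim_bound (u : nat -> R) B : (forall n, Rabs (u n) <= B) -> Rabs (real (Lim_seq u)) <= B.
Proof. intros H.
  assert (H1 : Rbar_le (Lim_seq u) (Lim_seq (fun _ => B))).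
  { apply Lim_seq_le_loc. exists 0%nat. intros n _. specialize (H n). apply Rabs_le_between in H. lra. }
  assert (H2 : Rbar_le (Lim_seq (fun _ => -B)) (Lim_seq u)).
  { apply Lim_seq_le_loc. exists 0%nat. intros n _. specialize (H n). apply Rabs_le_between in H. lra. }
  rewrite Lim_seq_const in H1, H2.
  destruct (Lim_seq u) as [x| |]; simpl in *; try contradiction.
  apply Rabs_le_between. lra. Qed.

Lemma zsumC_bound (g : Z3 -> C) B : (forall N, rsum_cube (fun k => Cmod (g k)) N <= B) ->
  Cmod (zsumC g) <= sqrt 2 * B.
Proof. intros H. eapply Rle_trans; [apply Cmod_2Rmax|].
  apply Rmult_le_compat_l; [apply sqrt_pos|]. unfold zsumC; simpl.
  apply Rmax_lub; apply real_lim_bound; intros n; unfold csum_cube;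
  [rewrite csum_fst|rewrite csum_snd]; eapply Rle_trans; try apply lsum_abs;
  eapply Rle_trans; try apply (H n); rewrite rsum_lsum; apply lsum_le; intros x _;
  eapply Rle_trans; try apply (Rmax_Cmod (g x)); [apply Rmax_l|apply Rmax_r]. Qed.

Lemma znorm_nonneg k : 0 <= znorm k.
Proof. destruct k as [[a b] c]; apply sqrt_pos. Qed.

Lemma Lam_spec k : ((forall s, Lam s k = 0) /\ znorm k = 0) \/
                   (1 <= znorm k /\ forall s, Lam s k = exp (s * ln (znorm k))).
Proof. destruct k as [[a b] c]. unfold Lam.
  destruct (Z.eqb_spec (Z.abs a + Z.abs b + Z.abs c) 0) as [E|E].
  - left. split; auto. assert (a = 0 /\ b = 0 /\ c = 0)%Z as (-> & -> & ->) by lia.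
    simpl. replace (0 * (0 * 1) + 0 * (0 * 1) + 0 * (0 * 1)) with 0 by ring. apply sqrt_0.
  - right. split; auto. simpl. apply Rle_trans with (sqrt 1); [rewrite sqrt_1; lra|]. apply sqrt_le_1_alt.
    assert (Z.abs a <= a*a /\ Z.abs b <= b*b /\ Z.abs c <= c*c)%Z by (repeat split; nia).
    assert (1 <= a * a + b * b + c * c)%Z by lia.
    apply IZR_le in H0. rewrite !plus_IZR, !mult_IZR in H0. simpl in H0. nra. Qed.

Lemma Lam_nonneg s k : 0 <= Lam s k.
Proof. destruct (Lam_spec k) as [[H _]|[_ H]]; rewrite H; [lra|]. left; apply exp_pos. Qed.

Lemma Lam_mult s t k : Lam s k * Lam t k = Lam (s + t) k.
Proof. destruct (Lam_spec k) as [[H _]|[_ H]]; rewrite !H; [ring|].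
  rewrite <- exp_plus. f_equal. ring. Qed.

Lemma Lam_sq s k : Lam s k ^ 2 = Lam (2 * s) k.
Proof. replace (2 * s) with (s + s) by ring. rewrite <- Lam_mult. ring. Qed.

Lemma Lam_1 k : Lam 1 k = znorm k.
Proof. destruct (Lam_spec k) as [[H H']|[H1 H]]; rewrite H; [auto|].
  rewrite Rmult_1_l, exp_ln; auto. lra. Qed.

Lemma exp_mono x y : x <= y -> exp x <= exp y.
Proof. intros [H|H]; [left; apply exp_increasing; auto|subst; lra]. Qed.

Lemma ln_ge0 x : 1 <= x -> 0 <= ln x.
Proof. intros H. rewrite <- ln_1. apply ln_le; lra. Qed.

Lemma Lam_le1 s k : s <= 0 -> Lam s k <= 1.
Proof. intros Hs. destruct (Lam_spec k) as [[H _]|[H1 H]]; rewrite H; [lra|].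
  rewrite <- exp_0. apply exp_mono. pose proof (ln_ge0 _ H1). nra. Qed.

Lemma Minkowski3 x1 x2 x3 y1 y2 y3 :
  sqrt ((x1 + y1) ^ 2 + (x2 + y2) ^ 2 + (x3 + y3) ^ 2) <=
  sqrt (x1 ^ 2 + x2 ^ 2 + x3 ^ 2) + sqrt (y1 ^ 2 + y2 ^ 2 + y3 ^ 2).
Proof.
  set (X := x1 ^ 2 + x2 ^ 2 + x3 ^ 2). set (Y := y1 ^ 2 + y2 ^ 2 + y3 ^ 2).
  assert (HX : 0 <= X) by (unfold X; nra). assert (HY : 0 <= Y) by (unfold Y; nra).
  assert (HC : x1 * y1 + x2 * y2 + x3 * y3 <= sqrt X * sqrt Y).
  { rewrite <- sqrt_mult by auto.
    eapply Rle_trans; [apply Rle_abs|]. rewrite <- sqrt_Rsqr_abs. apply sqrt_le_1_alt.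
    unfold Rsqr, X, Y.
    assert (E: (x1^2+x2^2+x3^2)*(y1^2+y2^2+y3^2) - (x1*y1+x2*y2+x3*y3)*(x1*y1+x2*y2+x3*y3) = (x1*y2 - x2*y1)^2 + (x1*y3-x3*y1)^2 + (x2*y3-x3*y2)^2) by ring.
    pose proof (pow2_ge_0 (x1*y2 - x2*y1)). pose proof (pow2_ge_0 (x1*y3-x3*y1)). pose proof (pow2_ge_0 (x2*y3-x3*y2)). lra. }
  rewrite <- (sqrt_Rsqr (sqrt X + sqrt Y)) by (pose proof (sqrt_pos X); pose proof (sqrt_pos Y); lra).
  apply sqrt_le_1_alt. unfold Rsqr.
  pose proof (sqrt_sqrt X HX). pose proof (sqrt_sqrt Y HY). unfold X, Y in *. nra. Qed.

Lemma znorm_tri k j : znorm k <= znorm j + znorm (zsub k j).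
Proof. destruct k as [[a b] c], j as [[x y] z].
  pose proof (Minkowski3 (IZR x) (IZR y) (IZR z) (IZR a - IZR x) (IZR b - IZR y) (IZR c - IZR z)) as H.
  replace (IZR x + (IZR a - IZR x)) with (IZR a) in H by ring.
  replace (IZR y + (IZR b - IZR y)) with (IZR b) in H by ring.
  replace (IZR z + (IZR c - IZR z)) with (IZR c) in H by ring.
  unfold znorm, zsub. rewrite !minus_IZR. exact H. Qed.

Lemma coord_le a b c : Rabs (IZR a) <= znorm (a, b, c) /\ Rabs (IZR b) <= znorm (a, b, c)
   /\ Rabs (IZR c) <= znorm (a, b, c).
Proof. unfold znorm. repeat split; rewrite <- sqrt_Rsqr_abs; apply sqrt_le_1_alt; unfold Rsqr;
  pose proof (pow2_ge_0 (IZR a)); pose proof (pow2_ge_0 (IZR b)); pose proof (pow2_ge_0 (IZR c)); nra. Qed.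

Lemma W_real x y z s e : 1 <= x -> 1 <= y -> 1 <= z -> z <= x + y -> 0 < s -> s + e <= 0 ->
  (exp (s * ln z) * (exp (e * ln x) * exp (- s * ln y))) ^ 2 <=
  exp (2 * s * ln 2) * (exp (2 * e * ln x) + exp (2 * e * ln y)).
Proof. intros Hx Hy Hz Hxy Hs Hse.
  rewrite <- !exp_plus. rewrite Rmult_plus_distr_l, <- (exp_plus (2*s*ln 2) (2*e*ln x)), <- (exp_plus (2*s*ln 2) (2*e*ln y)).
  assert (Hsq : forall t, exp t ^ 2 = exp (2 * t)) by (intros; simpl; rewrite Rmult_1_r, <- exp_plus; f_equal; ring).
  rewrite Hsq.
  pose proof (exp_pos (2 * s * ln 2 + 2 * e * ln x)). pose proof (exp_pos (2 * s * ln 2 + 2 * e * ln y)).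
  destruct (Rle_dec x y) as [Hle|Hle].
  - assert (ln z <= ln 2 + ln y) by (rewrite <- ln_mult by lra; apply ln_le; lra).
    assert (exp (2 * (s * ln z + (e * ln x + - s * ln y))) <= exp (2 * s * ln 2 + 2 * e * ln x)); [|lra].
    apply exp_mono. nra.
  - assert (ln z <= ln 2 + ln x) by (rewrite <- ln_mult by lra; apply ln_le; lra).
    assert (ln y <= ln x) by (apply ln_le; lra).
    assert (exp (2 * (s * ln z + (e * ln x + - s * ln y))) <= exp (2 * s * ln 2 + 2 * e * ln y)); [|lra].
    apply exp_mono. nra. Qed.

Lemma W_bound s e k j : 0 < s -> s + e <= 0 ->
  (Lam s k * (Lam e j * Lam (- s) (zsub k j))) ^ 2 <=
  exp (2 * s * ln 2) * (Lam (2 * e) j + Lam (2 * e) (zsub k j)).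
Proof. intros Hs Hse.
  assert (0 <= exp (2 * s * ln 2) * (Lam (2 * e) j + Lam (2 * e) (zsub k j))).
  { pose proof (exp_pos (2 * s * ln 2)). pose proof (Lam_nonneg (2*e) j). pose proof (Lam_nonneg (2*e) (zsub k j)). nra. }
  destruct (Lam_spec k) as [[Hk _]|[Hk1 Hk]]; [rewrite Hk; simpl; lra|].
  destruct (Lam_spec j) as [[Hj _]|[Hj1 Hj]]; [rewrite Hj; simpl; lra|].
  destruct (Lam_spec (zsub k j)) as [[Hm _]|[Hm1 Hm]]; [rewrite Hm; simpl; lra|].
  rewrite Hk, Hj, Hm, Hj, Hm. apply W_real; auto. apply znorm_tri. Qed.

Lemma ln_le_sub1 t : 0 < t -> ln t <= t - 1.
Proof. intros Ht. pose proof (exp_ineq1_le (ln t)). rewrite exp_ln in H; lra. Qed.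

Lemma tele_key d x : 0 < d -> 0 < x ->
  d * exp (- (1 + d) * ln (x + 1)) <= exp (- d * ln x) - exp (- d * ln (x + 1)).
Proof. intros Hd Hx.
  set (L1 := ln x). set (L2 := ln (x + 1)).
  assert (HL : L1 - L2 <= - / (x + 1)).
  { unfold L1, L2. replace x with (x / (x + 1) * (x + 1)) at 1 by (field; lra).
    rewrite ln_mult by (try apply Rdiv_lt_0_compat; lra).
    pose proof (ln_le_sub1 (x / (x + 1))). assert (0 < x / (x+1)) by (apply Rdiv_lt_0_compat; lra).
    specialize (H H0). replace (x / (x + 1) - 1) with (- / (x + 1)) in H by (field; lra). lra. }
  assert (E1 : exp (- d * L1) = exp (- d * L2) * exp (d * (L2 - L1))) by (rewrite <- exp_plus; f_equal; ring).
  assert (E2 : exp (- (1 + d) * L2) = exp (- d * L2) * / (x + 1)).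
  { replace (- (1 + d) * L2) with (- d * L2 + - L2) by ring. rewrite exp_plus. f_equal.
    unfold L2. rewrite exp_Ropp, exp_ln; lra. }
  assert (H3 : 1 + d * / (x + 1) <= exp (d * (L2 - L1))).
  { eapply Rle_trans; [|apply exp_ineq1_le]. nra. }
  rewrite E1, E2. pose proof (exp_pos (- d * L2)). nra. Qed.

Definition g1 (q : R) (z : Z) : R := exp (- q * ln (1 + Rabs (IZR z))).

Lemma g1_pos q z : 0 <= g1 q z.
Proof. left; apply exp_pos. Qed.

Lemma sum_g1_aux d N : 0 < d ->
  lsum (g1 (1 + d)) (zrange N) <= 1 + 2 / d * (1 - exp (- d * ln (INR N + 1))).
Proof. intros Hd. induction N.
  - simpl. unfold g1. rewrite Rabs_R0, !Rplus_0_r, !Rplus_0_l, ln_1, !Rmult_0_r, exp_0. lra.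
  - rewrite zrange_S.
    replace (lsum (g1 (1 + d)) (((- Z.of_nat (S N))%Z :: zrange N) ++ [Z.of_nat (S N)])) with
      (g1 (1+d) (- Z.of_nat (S N))%Z + lsum (g1 (1+d)) (zrange N) + g1 (1+d) (Z.of_nat (S N)))
      by (rewrite lsum_app; unfold lsum; simpl; ring).
    assert (Hg : forall z, Rabs (IZR z) = INR (S N) -> g1 (1 + d) z = exp (- (1 + d) * ln ((INR N + 1) + 1))).
    { intros z Hz. unfold g1. rewrite Hz, S_INR. f_equal. f_equal. f_equal. ring. }
    rewrite !Hg.
    2: { rewrite <- INR_IZR_INZ. apply Rabs_pos_eq, pos_INR. }
    2: { rewrite opp_IZR, Rabs_Ropp, <- INR_IZR_INZ. apply Rabs_pos_eq, pos_INR. }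
    pose proof (tele_key d (INR N + 1) Hd). pose proof (pos_INR N).
    rewrite S_INR. assert (0 < INR N + 1) by lra. specialize (H H1).
    apply Rmult_le_compat_l with (r := 2 / d) in H; [|left; apply Rdiv_lt_0_compat; lra].
    replace (2 / d * (d * exp (- (1 + d) * ln (INR N + 1 + 1)))) with (2 * exp (- (1 + d) * ln (INR N + 1 + 1))) in H by (field; lra).
    lra. Qed.

Lemma sum_g1 d N : 0 < d -> lsum (g1 (1 + d)) (zrange N) <= 1 + 2 / d.
Proof. intros Hd. eapply Rle_trans; [apply sum_g1_aux; auto|].
  pose proof (exp_pos (- d * ln (INR N + 1))). assert (0 < 2 / d) by (apply Rdiv_lt_0_compat; lra). nra. Qed.

Definition G3 (q : R) (m : Z3) : R := let '(a, b, c) := m in g1 q a * g1 q b * g1 q c.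

Lemma rsum_G3 q N : rsum_cube (G3 q) N = lsum (g1 q) (zrange N) ^ 3.
Proof. rewrite rsum_lsum. unfold cube. rewrite lsum_flat_map.
  set (Z0 := zrange N). set (S0 := lsum (g1 q) Z0).
  transitivity (lsum (fun a => S0 * S0 * g1 q a) Z0); [|rewrite lsum_scal; fold S0; ring].
  apply lsum_ext. intros a _. rewrite lsum_flat_map.
  transitivity (lsum (fun b => (S0 * g1 q a) * g1 q b) Z0); [|rewrite lsum_scal; fold S0; ring].
  apply lsum_ext. intros b _. rewrite lsum_map. simpl.
  transitivity (lsum (fun c => (g1 q a * g1 q b) * g1 q c) Z0); [reflexivity|rewrite lsum_scal; fold S0; ring].
Qed.

Lemma Lam_G3 q m : 0 < q -> Lam (- (3 * q)) m <= exp (3 * q * ln 2) * G3 q m.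
Proof. intros Hq. destruct m as [[a b] c].
  assert (0 <= exp (3 * q * ln 2) * G3 q (a, b, c)).
  { unfold G3. pose proof (exp_pos (3 * q * ln 2)). pose proof (g1_pos q a). pose proof (g1_pos q b).
    pose proof (g1_pos q c). apply Rmult_le_pos; [lra|]. repeat apply Rmult_le_pos; auto. }
  destruct (Lam_spec (a, b, c)) as [[H1 _]|[Hn H1]]; [rewrite H1; lra|]. rewrite H1.
  unfold G3, g1. rewrite <- !exp_plus. apply exp_mono.
  set (n := znorm (a, b, c)) in *.
  destruct (coord_le a b c) as (Ha & Hb & Hc). fold n in Ha, Hb, Hc.
  assert (Hl : forall t, 0 <= t -> t <= n -> ln (1 + t) <= ln 2 + ln n).
  { intros t Ht Htn. rewrite <- ln_mult by lra. apply ln_le; lra. }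
  pose proof (Hl _ (Rabs_pos _) Ha). pose proof (Hl _ (Rabs_pos _) Hb). pose proof (Hl _ (Rabs_pos _) Hc).
  nra. Qed.

Lemma lattice_sum q L : 1 < q -> NoDup L ->
  lsum (Lam (- (3 * q))) L <= exp (3 * q * ln 2) * (1 + 2 / (q - 1)) ^ 3.
Proof. intros Hq HL. destruct (list_in_cube L) as [N HN].
  eapply Rle_trans; [apply lsum_le; intros m _; apply (Lam_G3 q m); lra|].
  eapply Rle_trans; [apply lsum_incl; eauto|].
  { intros m. destruct m as [[a b] c]. pose proof (exp_pos (3 * q * ln 2)).
    pose proof (g1_pos q a). pose proof (g1_pos q b). pose proof (g1_pos q c). unfold G3.
    apply Rmult_le_pos; [lra|]. repeat apply Rmult_le_pos; auto. }
  rewrite lsum_scal. apply Rmult_le_compat_l; [left; apply exp_pos|].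
  rewrite <- rsum_lsum, rsum_G3.
  replace q with (1 + (q - 1)) at 1 by ring.
  pose proof (sum_g1 (q - 1) N ltac:(lra)).
  assert (0 <= lsum (g1 (1 + (q - 1))) (zrange N)) by (apply lsum_nonneg; intros; apply g1_pos).
  apply pow_incr. lra. Qed.

Lemma CS3 x1 x2 x3 y1 y2 y3 :
  x1 * y1 + x2 * y2 + x3 * y3 <= sqrt (x1 ^ 2 + x2 ^ 2 + x3 ^ 2) * sqrt (y1 ^ 2 + y2 ^ 2 + y3 ^ 2).
Proof. rewrite <- sqrt_mult by nra.
  eapply Rle_trans; [apply Rle_abs|]. rewrite <- sqrt_Rsqr_abs. apply sqrt_le_1_alt.
  unfold Rsqr.
  assert (E: (x1^2+x2^2+x3^2)*(y1^2+y2^2+y3^2) - (x1*y1+x2*y2+x3*y3)*(x1*y1+x2*y2+x3*y3) = (x1*y2 - x2*y1)^2 + (x1*y3-x3*y1)^2 + (x2*y3-x3*y2)^2) by ring.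
  pose proof (pow2_ge_0 (x1*y2 - x2*y1)). pose proof (pow2_ge_0 (x1*y3-x3*y1)). pose proof (pow2_ge_0 (x2*y3-x3*y2)). lra. Qed.

Lemma vdot_bound w m : Cmod (vdot w m) <= sqrt (vmod2 w) * znorm m.
Proof. destruct w as [[a b] c], m as [[x y] z]. unfold vdot, vmod2, znorm.
  eapply Rle_trans; [apply Cmod_triangle|].
  eapply Rle_trans; [apply Rplus_le_compat_r, Cmod_triangle|].
  rewrite !Cmod_mult, !Cmod_R.
  eapply Rle_trans; [apply CS3|].
  rewrite !pow2_abs. lra. Qed.

Lemma Cmod_Ci : Cmod Ci = 1.
Proof. unfold Cmod, Ci. simpl. replace (0 * (0 * 1) + 1 * (1 * 1)) with 1 by ring. apply sqrt_1. Qed.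

Definition aV (r : R) (v : Z3 -> vec3) (j : Z3) : R := sqrt (vmod2 (v j)) * Lam (r - 1) j.
Definition bH (t : R) (th : Z3 -> C) (m : Z3) : R := Cmod (th m) * Lam t m.

Lemma vmod2_nonneg w : 0 <= vmod2 w.
Proof. destruct w as [[a b] c]. unfold vmod2. nra. Qed.

Lemma aV_nonneg r v j : 0 <= aV r v j.
Proof. unfold aV. apply Rmult_le_pos; [apply sqrt_pos|apply Lam_nonneg]. Qed.
Lemma bH_nonneg t th m : 0 <= bH t th m.
Proof. unfold bH. apply Rmult_le_pos; [apply Cmod_ge_0|apply Lam_nonneg]. Qed.

Lemma aV_sq r v j : aV r v j ^ 2 = vmod2 (v j) * Lam (r - 1) j ^ 2.
Proof. unfold aV. rewrite Rpow_mult_distr, pow2_sqrt; auto. apply vmod2_nonneg. Qed.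
Lemma bH_sq t th m : bH t th m ^ 2 = Cmod (th m) ^ 2 * Lam t m ^ 2.
Proof. unfold bH. apply Rpow_mult_distr. Qed.

Lemma conv_bound alpha beta r v th k j :
  Cmod (conv_term alpha v th k j) <=
  aV r v j * bH (r - beta) th (zsub k j) * (Lam (1 - r - 2 * alpha) j * Lam (- (r - beta - 1)) (zsub k j)).
Proof. unfold conv_term. rewrite !Cmod_mult, Cmod_R, Cmod_Ci, Rabs_pos_eq by apply Lam_nonneg.
  pose proof (vdot_bound (v j) (zsub k j)).
  replace (aV r v j * bH (r - beta) th (zsub k j) * (Lam (1 - r - 2 * alpha) j * Lam (- (r - beta - 1)) (zsub k j)))
    with (Lam (-2 * alpha) j * (1 * (sqrt (vmod2 (v j)) * znorm (zsub k j)) * Cmod (th (zsub k j)))).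
  2: { unfold aV, bH. rewrite <- Lam_1.
       replace (Lam (-2 * alpha) j) with (Lam (r - 1) j * Lam (1 - r - 2 * alpha) j) by (rewrite Lam_mult; f_equal; ring).
       replace (Lam 1 (zsub k j)) with (Lam (r - beta) (zsub k j) * Lam (- (r - beta - 1)) (zsub k j)) by (rewrite Lam_mult; f_equal; ring).
       ring. }
  pose proof (Lam_nonneg (-2 * alpha) j). pose proof (Cmod_ge_0 (vdot (v j) (zsub k j))).
  pose proof (Cmod_ge_0 (th (zsub k j))).
  apply Rmult_le_compat_l; auto. apply Rmult_le_compat_r; auto. lra. Qed.

Lemma nodup_shift k N : NoDup (map (zsub k) (cube N)).
Proof. apply FinFun.Injective_map_NoDup; [apply zsub_inj|apply NoDup_cube]. Qed.
Lemma nodup_shift2 j N : NoDup (map (fun k => zsub k j) (cube N)).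
Proof. apply FinFun.Injective_map_NoDup; [apply zsub_inj2|apply NoDup_cube]. Qed.

Theorem lemma15 (alpha beta r : R) :
  1 / 2 < beta -> beta < 5 / 4 -> alpha + beta = 5 / 4 ->
  Rmax (2 * beta) (beta + 1) < r ->
  exists C0 : R, 0 < C0 /\
    forall (v : Z3 -> vec3) (theta phi : Z3 -> C),
      in_V (r - 1) v -> in_H (r - beta) theta -> in_H (r - beta - 1) phi ->
      (forall k, abs_summable (conv_term alpha v theta k)) /\
      abs_summable (l2_integrand (transport_coef alpha v theta)
                                 (Lam_apply (2 * r - 2 * beta - 2) phi)) /\
      Cmod (l2_pair (transport_coef alpha v theta)
                    (Lam_apply (2 * r - 2 * beta - 2) phi))
        <= C0 * Vnorm (r - 1) v * Hnorm (r - beta) theta * Hnorm (r - beta - 1) phi.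
Proof.
  intros Hb1 Hb2 Hab Hr.
  assert (Hr1 : 2 * beta < r) by (eapply Rle_lt_trans; [apply Rmax_l|exact Hr]).
  assert (Hr2 : beta + 1 < r) by (eapply Rle_lt_trans; [apply Rmax_r|exact Hr]).
  set (s := r - beta - 1). set (e1 := 1 - r - 2 * alpha).
  set (q := - (2 * e1) / 3).
  assert (Hq : 1 < q) by (unfold q, e1; lra).
  assert (Hs : 0 < s) by (unfold s; lra).
  assert (Hse : s + e1 <= 0) by (unfold s, e1; lra).
  set (Zp := exp (3 * q * ln 2) * (1 + 2 / (q - 1)) ^ 3).
  assert (HZp : forall L, NoDup L -> lsum (Lam (2 * e1)) L <= Zp).
  { intros L HL. replace (2 * e1) with (- (3 * q)) by (unfold q; field). apply lattice_sum; auto. }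
  set (K := exp (2 * s * ln 2) * (Zp + Zp)).
  assert (HZp0 : 0 <= Zp) by (eapply Rle_trans; [|apply (HZp [])]; [simpl; lra|constructor]).
  assert (HK : 0 <= K) by (unfold K; pose proof (exp_pos (2 * s * ln 2)); nra).
  exists ((2 * PI) ^ 3 * sqrt 2 * (sqrt 2 * sqrt K) + 1). split.
  { pose proof PI_RGT_0. pose proof (sqrt_pos 2). pose proof (sqrt_pos K).
    assert (0 <= (2 * PI) ^ 3) by (apply pow_le; lra).
    assert (0 <= (2 * PI) ^ 3 * sqrt 2 * (sqrt 2 * sqrt K)) by (apply Rmult_le_pos; [apply Rmult_le_pos|apply Rmult_le_pos]; lra). lra. }
  intros v th ph HV HT HP.
  destruct HV as (_ & _ & _ & Ma & HMa). destruct HT as (_ & _ & Mb & HMb). destruct HP as (_ & _ & Mc & HMc).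
  set (Fa := fun k => vmod2 (v k) * Lam (r - 1) k ^ 2).
  set (Fb := fun k => Cmod (th k) ^ 2 * Lam (r - beta) k ^ 2).
  set (Fc := fun k => Cmod (ph k) ^ 2 * Lam (r - beta - 1) k ^ 2).
  assert (BFa : bnd Fa).
  { split; [intros; unfold Fa; pose proof (vmod2_nonneg (v x)); pose proof (pow2_ge_0 (Lam (r-1) x)); nra|eauto]. }
  assert (BFb : bnd Fb).
  { split; [intros; unfold Fb; pose proof (pow2_ge_0 (Cmod (th x))); pose proof (pow2_ge_0 (Lam (r-beta) x)); nra|eauto]. }
  assert (BFc : bnd Fc).
  { split; [intros; unfold Fc; pose proof (pow2_ge_0 (Cmod (ph x))); pose proof (pow2_ge_0 (Lam (r-beta-1) x)); nra|eauto]. }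
  set (Na := zsumR Fa). set (Nb := zsumR Fb). set (Nc := zsumR Fc).
  assert (HNa : 0 <= Na) by (apply zsum_nonneg; auto).
  assert (HNb : 0 <= Nb) by (apply zsum_nonneg; auto).
  assert (HNc : 0 <= Nc) by (apply zsum_nonneg; auto).
  set (a := aV r v). set (b := bH (r - beta) th). set (c := bH (r - beta - 1) ph).
  assert (Sa : forall L, NoDup L -> lsum (fun j => a j ^ 2) L <= Na).
  { intros L HL. erewrite lsum_ext; [apply zsum_list; eauto|]. intros x _. unfold a. rewrite aV_sq. reflexivity. }
  assert (Sb : forall L, NoDup L -> lsum (fun j => b j ^ 2) L <= Nb).
  { intros L HL. erewrite lsum_ext; [apply zsum_list; eauto|]. intros x _. unfold b. rewrite bH_sq. reflexivity. }
  assert (Sc : forall L, NoDup L -> lsum (fun j => c j ^ 2) L <= Nc).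
  { intros L HL. erewrite lsum_ext; [apply zsum_list; eauto|]. intros x _. unfold c. rewrite bH_sq. reflexivity. }
  assert (Sb1 : forall m, b m ^ 2 <= Nb).
  { intros m. pose proof (Sb [m] ltac:(repeat constructor; intros [])). simpl in H. lra. }
  assert (Ha0 : forall j, 0 <= a j) by (intros; apply aV_nonneg).
  assert (Hb0 : forall j, 0 <= b j) by (intros; apply bH_nonneg).
  assert (Hc0 : forall j, 0 <= c j) by (intros; apply bH_nonneg).
  assert (Hconv : forall k j, Cmod (conv_term alpha v th k j) <= a j * b (zsub k j) * (Lam e1 j * Lam (- s) (zsub k j)))
    by (intros; apply conv_bound).
  split.
  { intros k. exists (sqrt Na * sqrt Nb). intros N. rewrite rsum_lsum.
    eapply Rle_trans; [apply lsum_le; intros j _; apply Hconv|].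
    eapply Rle_trans; [apply lsum_le with (g := fun j => a j * b (zsub k j))|].
    { intros j _. pose proof (Ha0 j). pose proof (Hb0 (zsub k j)).
      pose proof (Lam_le1 e1 j ltac:(unfold e1; lra)). pose proof (Lam_le1 (- s) (zsub k j) ltac:(lra)).
      pose proof (Lam_nonneg e1 j). pose proof (Lam_nonneg (-s) (zsub k j)).
      assert (Lam e1 j * Lam (- s) (zsub k j) <= 1) by nra.
      rewrite <- (Rmult_1_r (a j * b (zsub k j))) at 2. apply Rmult_le_compat_l; nra. }
    eapply Rle_trans; [apply (lsum_CS a (fun j => b (zsub k j))); auto|].
    apply Rmult_le_compat; try apply sqrt_pos; apply sqrt_le_1_alt; auto using NoDup_cube.
    rewrite <- (lsum_map (fun m => b m ^ 2)). apply Sb. apply nodup_shift. }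
  set (g := fun k j => a j ^ 2 * b (zsub k j) ^ 2).
  assert (Bg : forall k, bnd (g k)).
  { intros k. split.
    - intros j. unfold g. pose proof (pow2_ge_0 (a j)). pose proof (pow2_ge_0 (b (zsub k j))). nra.
    - exists (Nb * Na). intros N. rewrite rsum_lsum.
      eapply Rle_trans; [apply lsum_le with (g := fun j => Nb * a j ^ 2)|].
      { intros j _. unfold g. pose proof (pow2_ge_0 (a j)). pose proof (Sb1 (zsub k j)). nra. }
      rewrite lsum_scal. apply Rmult_le_compat_l; auto. apply Sa, NoDup_cube. }
  set (D := fun k => zsumR (g k)).
  assert (HD0 : forall k, 0 <= D k) by (intros; apply zsum_nonneg; auto).
  set (T := transport_coef alpha v th).
  assert (HT : forall k, Lam s k * Cmod (T k) <= sqrt 2 * (sqrt K * sqrt (D k))).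
  { intros k. pose proof (sqrt_pos K). pose proof (sqrt_pos (D k)). pose proof (sqrt_pos 2).
    destruct (Lam_nonneg s k) as [Hl|Hl].
    2: { rewrite <- Hl. rewrite Rmult_0_l. apply Rmult_le_pos; auto. apply Rmult_le_pos; auto. }
    assert (Cmod (T k) <= sqrt 2 * (sqrt K * sqrt (D k) / Lam s k)).
    { apply zsumC_bound. intros N.
      apply Rmult_le_reg_l with (Lam s k); auto.
      replace (Lam s k * (sqrt K * sqrt (D k) / Lam s k)) with (sqrt (D k) * sqrt K) by (field; lra).
      rewrite rsum_lsum, <- lsum_scal.
      eapply Rle_trans; [apply lsum_le with (g := fun j => (a j * b (zsub k j)) * (Lam s k * (Lam e1 j * Lam (- s) (zsub k j))))|].
      { intros j _. pose proof (Hconv k j).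
        replace (a j * b (zsub k j) * (Lam s k * (Lam e1 j * Lam (- s) (zsub k j)))) with
          (Lam s k * (a j * b (zsub k j) * (Lam e1 j * Lam (- s) (zsub k j)))) by ring.
        apply Rmult_le_compat_l; lra. }
      eapply Rle_trans; [apply lsum_CS|].
      { intros j. pose proof (Ha0 j). pose proof (Hb0 (zsub k j)). nra. }
      { intros j. pose proof (Lam_nonneg s k). pose proof (Lam_nonneg e1 j). pose proof (Lam_nonneg (-s) (zsub k j)).
        repeat apply Rmult_le_pos; auto. }
      apply Rmult_le_compat; try apply sqrt_pos; apply sqrt_le_1_alt.
      - erewrite lsum_ext; [apply zsum_list; auto; apply NoDup_cube|].
        intros j _. unfold g. ring.
      - eapply Rle_trans; [apply lsum_le; intros j _; apply W_bound; auto|].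
        rewrite lsum_scal, lsum_plus. unfold K. apply Rmult_le_compat_l; [left; apply exp_pos|].
        apply Rplus_le_compat; [apply HZp, NoDup_cube|].
        rewrite <- (lsum_map (Lam (2 * e1))). apply HZp, nodup_shift. }
    apply Rmult_le_compat_l with (r := Lam s k) in H2; [|lra].
    eapply Rle_trans; [exact H2|]. right. field. lra. }
  assert (Hl2 : forall N, rsum_cube (fun k => Cmod (l2_integrand T (Lam_apply (2 * r - 2 * beta - 2) ph) k)) N
                <= sqrt 2 * sqrt K * (sqrt (Na * Nb) * sqrt Nc)).
  { intros N. rewrite rsum_lsum.
    eapply Rle_trans; [apply lsum_le with (g := fun k => (sqrt 2 * sqrt K) * (sqrt (D k) * c k))|].
    { intros k _. unfold l2_integrand, Lam_apply. rewrite Cmod_mult, Cmod_conj, Cmod_mult, Cmod_R,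
        Rabs_pos_eq by apply Lam_nonneg.
      replace (2 * r - 2 * beta - 2) with (s + s) by (unfold s; ring). rewrite <- Lam_mult.
      replace (Cmod (T k) * (Lam s k * Lam s k * Cmod (ph k))) with ((Lam s k * Cmod (T k)) * c k)
        by (unfold c, bH, s; ring).
      pose proof (HT k). pose proof (Hc0 k).
      replace (sqrt 2 * sqrt K * (sqrt (D k) * c k)) with ((sqrt 2 * (sqrt K * sqrt (D k))) * c k) by ring.
      apply Rmult_le_compat_r; auto. }
    rewrite lsum_scal. apply Rmult_le_compat_l.
    { apply Rmult_le_pos; apply sqrt_pos. }
    eapply Rle_trans; [apply (lsum_CS (fun k => sqrt (D k)) c); auto; intros; apply sqrt_pos|].
    apply Rmult_le_compat; try apply sqrt_pos; apply sqrt_le_1_alt; [|apply Sc, NoDup_cube].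
    erewrite lsum_ext; [|intros k _; rewrite pow2_sqrt by auto; reflexivity].
    apply lsum_zsum_le; auto. intros M.
    erewrite lsum_ext; [|intros k _; rewrite rsum_lsum; reflexivity].
    rewrite lsum_swap.
    eapply Rle_trans; [apply lsum_le with (g := fun j => Nb * a j ^ 2)|].
    { intros j _. unfold g. rewrite (lsum_scal (fun k => b (zsub k j) ^ 2) (a j ^ 2)).
      rewrite (Rmult_comm Nb). apply Rmult_le_compat_l; [apply pow2_ge_0|].
      rewrite <- (lsum_map (fun m => b m ^ 2) (fun k => zsub k j)). apply Sb, nodup_shift2. }
    rewrite lsum_scal. rewrite (Rmult_comm Na). apply Rmult_le_compat_l; auto. apply Sa, NoDup_cube. }
  split; [exists (sqrt 2 * sqrt K * (sqrt (Na * Nb) * sqrt Nc)); exact Hl2|].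
  change (Vnorm (r - 1) v) with (sqrt Na). change (Hnorm (r - beta) th) with (sqrt Nb).
  change (Hnorm s ph) with (sqrt Nc).
  unfold l2_pair. rewrite Cmod_mult, Cmod_R.
  assert (H2P : 0 <= (2 * PI) ^ 3) by (apply pow_le; pose proof PI_RGT_0; lra).
  rewrite Rabs_pos_eq by auto.
  pose proof (zsumC_bound _ _ Hl2) as HC.
  rewrite sqrt_mult in HC by auto.
  assert (HP : 0 <= sqrt Na * sqrt Nb * sqrt Nc) by (pose proof (sqrt_pos Na); pose proof (sqrt_pos Nb); pose proof (sqrt_pos Nc);
    apply Rmult_le_pos; [apply Rmult_le_pos|]; auto).
  apply Rmult_le_compat_l with (r := (2 * PI) ^ 3) in HC; auto.
  eapply Rle_trans; [exact HC|].
  replace (((2*PI)^3 * sqrt 2 * (sqrt 2 * sqrt K) + 1) * sqrt Na * sqrt Nb * sqrt Nc) with ((2 * PI) ^ 3 * (sqrt 2 * (sqrt 2 * sqrt K * (sqrt Na * sqrt Nb * sqrt Nc))) + sqrt Na * sqrt Nb * sqrt Nc) by ring.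
  lra.
Qed.
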